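(* Let $\mathcal{P}_F$ be a quantitative definite clause specification in $\mathcal{R}(\mathcal{L})$, $\varphi$ an $\mathcal{L}$-constraint, $G$ a goal and $v$ a real number. Then $\varphi\ {}_v\!\!\rightarrow G$ is a logical consequence of $\mathcal{P}_F$ if and only if every minimal model $\mathcal{A}$ of $\mathcal{P}_F$ is a model of $\{\varphi\ {}_v\!\!\rightarrow G\}$.
   Context: A constraint language $\mathcal{L}$ consists of: a signature; a decidable infinite set $\mathsf{VAR}$ of variables; a decidable set of $\mathcal{L}$-constraints; a computable function $\mathsf{V}$ giving each constraint $\phi$ a finite set $\mathsf{V}(\phi)$ of variables; a nonempty set of $\mathcal{L}$-interpretations $\mathcal{I}$, each with nonempty domain $\mathcal{D}$ and set $\mathsf{ASS}$ of assignments $\mathsf{VAR}\to\mathcal{D}$; and solution sets $[\![\phi]\!]^{\mathcal{I}}\subseteq\mathsf{ASS}$ depending only on the values of variables in $\mathsf{V}(\phi)$. $\mathcal{R}(\mathcal{L})$ adds relation symbols $\mathcal{R}$ with arities; an atom is $r(\vec x)$ with $\vec x$ a tuple of pairwise distinct variables of the right length. A quantitative definite clause specification $\mathcal{P}_F$ is a finite set of clauses $r(\vec{x})\leftarrow_f \phi \,\&\, q_1(\vec{x}_1)\,\&\ldots\&\, q_k(\vec{x}_k)$ ($r(\vec x),q_j(\vec x_j)$ atoms, $\phi$ an $\mathcal{L}$-constraint, $k\ge0$, $f\in(0,1]$). An $\mathcal{R}(\mathcal{L})$-interpretation $\mathcal{A}$ extending $\mathcal{I}$ has the domain of $\mathcal{I}$,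 agrees with $\mathcal{I}$ on $\mathcal{L}$-constraints, and assigns to each $n$-ary $r$ a membership function $\mu(\_\,;r^{\mathcal{A}}):\mathcal{D}^n\to[0,1]$. For interpretations extending the same $\mathcal{I}$ (base equivalent), $\mathcal{A}\subseteq\mathcal{A}'$ iff $\mu(\alpha(\vec x);r^{\mathcal{A}})\le\mu(\alpha(\vec x);r^{\mathcal{A}'})$ for all $r,\alpha,\vec x$. $\mathcal{A}$ (extending $\mathcal{I}$) is a model of $\mathcal{P}_F$ iff for each $\alpha\in\mathsf{ASS}$ and clause $r(\vec{x})\leftarrow_f \phi \,\&\, q_1(\vec{x}_1)\,\&\ldots\&\, q_k(\vec{x}_k)$ in $\mathcal{P}_F$: if $\alpha\in[\![\phi]\!]^{\mathcal{I}}$ then $\mu(\alpha(\vec x);r^{\mathcal{A}})\ge f\times\min\{\mu(\alpha(\vec x_j);q_j^{\mathcal{A}})\mid 1\le j\le k\}$ ($\min\emptyset=1$). A minimal model of $\mathcal{P}_F$ is, for some $\mathcal{L}$-interpretation $\mathcal{I}$, a model $\mathcal{A}$ of $\mathcal{P}_F$ extending $\mathcal{I}$ with $\mathcal{A}\subseteq\mathcal{B}$ for every model $\mathcal{B}$ of $\mathcal{P}_F$ extending $\mathcal{I}$. (Models of a single formula $r(\vec x)\leftarrow_f\varphi$ are defined by the same condition with $k=0$.) Goals are (by convention) of the form $G=r(\vec x)\,\&\,\phi$ with $r(\vec x)$ an atom and $\phi$ an $\mathcal{L}$-constraint. An interpretation $\mathcal{A}$ is a model of $\{\varphi\ {}_v\!\!\rightarrow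 r(\vec x)\,\&\,\phi\}$ iff $[\![\varphi]\!]^{\mathcal{A}}\subseteq[\![\phi]\!]^{\mathcal{A}}$ and $\mathcal{A}$ is a model of $\{r(\vec x)\leftarrow_v\varphi\}$. The formula $\varphi\ {}_v\!\!\rightarrow G$ is a logical consequence of $\mathcal{P}_F$ iff every model of $\mathcal{P}_F$ (over any $\mathcal{L}$-interpretation) is a model of $\{\varphi\ {}_v\!\!\rightarrow G\}$. *)

(* Defs.v *)
From Stdlib Require Import Reals List.
From Stdlib Require Vectors.Fin.
Open Scope R_scope.

(** A constraint language L. The signature is left implicit: it only serves to
    build the (abstract) type of constraints [Constr]. *)
Record ConstraintLanguage := {
  Var : Type;
  var_eq_dec : forall x y : Var, {x = y} + {x <> y};
  var_infinite : forall l : list Var, exists x, ~ In x l;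
  Constr : Type;
  V : Constr -> list Var;
  Interp : Type;
  interp_ne : inhabited Interp;
  Dom : Interp -> Type;
  dom_ne : forall I, inhabited (Dom I);
  sol : forall I, Constr -> (Var -> Dom I) -> Prop;
  sol_local : forall I phi (a b : Var -> Dom I),
      (forall x, In x (V phi) -> a x = b x) -> (sol I phi a <-> sol I phi b)
}.

Set Implicit Arguments.

Section QDC.
Variable L : ConstraintLanguage.
Variable Rel : Type.
Variable arity : Rel -> nat.

Record Atom := {
  at_rel : Rel;
  at_args : Fin.t (arity at_rel) -> Var L;
  at_inj : forall i j, at_args i = at_args j -> i = j
}.

(** A quantitative definite clause  r(x) <-_f phi & q1(x1) & ... & qk(xk). *)
Record Clause := {
  cl_head : Atom;
  cl_f : R;
  cl_f_range : 0 < cl_f <= 1;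
  cl_constr : Constr L;
  cl_body : list Atom
}.

Definition Spec := list Clause.

Unset Implicit Arguments.
Record RInterp (I : Interp L) := {
  mu : forall r : Rel, (Fin.t (arity r) -> Dom L I) -> R;
  mu_range : forall r (d : Fin.t (arity r) -> Dom L I), 0 <= mu r d <= 1
}.

Set Implicit Arguments.
Definition atom_val {I} (A : RInterp I) (a : Atom) (alpha : Var L -> Dom L I) : R :=
  mu I A (at_rel a) (fun i => alpha (at_args a i)).

Definition min_list (l : list R) : R := fold_right Rmin 1 l.

Definition is_model (P : Spec) {I} (A : RInterp I) : Prop :=
  forall c, In c P -> forall alpha : Var L -> Dom L I,
    sol L I (cl_constr c) alpha ->
    atom_val A (cl_head c) alpha >=
      cl_f c * min_list (map (fun q => atom_val A q alpha) (cl_body c)).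

(** A ⊆ B for base-equivalent interpretations *)
Definition rsub {I} (A B : RInterp I) : Prop :=
  forall (a : Atom) (alpha : Var L -> Dom L I), atom_val A a alpha <= atom_val B a alpha.

Definition minimal_model (P : Spec) {I} (A : RInterp I) : Prop :=
  is_model P A /\ forall B : RInterp I, is_model P B -> rsub A B.

Record Goal := { g_atom : Atom; g_constr : Constr L }.

(** A is a model of { r(x) <-_f phi } (formula with k = 0, min ∅ = 1) *)
Definition is_model_formula {I} (A : RInterp I) (a : Atom) (f : R) (phi : Constr L) : Prop :=
  forall alpha : Var L -> Dom L I, sol L I phi alpha -> atom_val A a alpha >= f * 1.

Definition is_model_goal {I} (A : RInterp I) (phi : Constr L) (v : R) (G : Goal) : Prop :=
  (forall alpha, sol L I phi alpha -> sol L I (g_constr G) alpha) /\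
  is_model_formula A (g_atom G) v phi.

Definition logical_consequence (P : Spec) (phi : Constr L) (v : R) (G : Goal) : Prop :=
  forall (I : Interp L) (A : RInterp I), is_model P A -> is_model_goal A phi v G.

End QDC.

(* Main.v *)
Require Import Defs.
From Stdlib Require Import Reals List Lra.
Open Scope R_scope.

Lemma min_list_mono {T} (f g : T -> R) (l : list T) :
  (forall q, f q <= g q) -> min_list (map f l) <= min_list (map g l).
Proof.
  intros H; induction l as [|a l IH]; simpl; [lra|].
  unfold Rmin at 1 2.
  specialize (H a).
  destruct (Rle_dec (f a) (min_list (map f l)));
  destruct (Rle_dec (g a) (min_list (map g l))); lra.
Qed.

Section Inf.
Variables (L : ConstraintLanguage) (Rel : Type) (arity : Rel -> nat)
  (P : Spec L arity) (I : Interp L) (A0 : RInterp L Rel arity I)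
  (HA0 : is_model P A0).

Definition Eset r d : R -> Prop :=
  fun y => exists B : RInterp L Rel arity I, is_model P B /\ y = - mu L Rel arity I B r d.

Lemma Eset_bound r d : bound (Eset r d).
Proof. exists 0. intros y [B [_ ->]]. pose proof (mu_range L Rel arity I B r d). lra. Qed.

Lemma Eset_ne r d : exists y, Eset r d y.
Proof. exists (- mu L Rel arity I A0 r d). exists A0; auto. Qed.

Definition infmu r d : R :=
  - proj1_sig (completeness (Eset r d) (Eset_bound r d) (Eset_ne r d)).

Lemma infmu_le r d (B : RInterp L Rel arity I) : is_model P B -> infmu r d <= mu L Rel arity I B r d.
Proof.
  intros HB. unfold infmu.
  destruct (completeness (Eset r d) (Eset_bound r d) (Eset_ne r d)) as [m Hm]; simpl; destruct Hm as [Hub _].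
  assert (- mu L Rel arity I B r d <= m) by (apply Hub; exists B; auto). lra.
Qed.

Lemma infmu_ge r d (x : R) : (forall B : RInterp L Rel arity I, is_model P B -> x <= mu L Rel arity I B r d) ->
  x <= infmu r d.
Proof.
  intros H. unfold infmu.
  destruct (completeness (Eset r d) (Eset_bound r d) (Eset_ne r d)) as [m Hm]; simpl; destruct Hm as [_ Hlub].
  assert (m <= - x). { apply Hlub. intros y [B [HB ->]]. specialize (H B HB). lra. }
  lra.
Qed.

Lemma infmu_range r d : 0 <= infmu r d <= 1.
Proof.
  split.
  - apply infmu_ge. intros B _. apply (mu_range L Rel arity I B).
  - pose proof (infmu_le r d A0 HA0). pose proof (mu_range L Rel arity I A0 r d). lra.
Qed.

Definition Minf : RInterp L Rel arity I := {| mu := infmu; mu_range := infmu_range |}.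

Lemma Minf_model : is_model P Minf.
Proof.
  intros c Hc alpha Hs. unfold atom_val at 1. simpl.
  apply Rle_ge, infmu_ge. intros B HB.
  pose proof (HB c Hc alpha Hs) as HB2. unfold atom_val at 1 in HB2.
  apply Rge_le in HB2. eapply Rle_trans; [|exact HB2].
  pose proof (cl_f_range c).
  apply Rmult_le_compat_l; [lra|].
  apply min_list_mono. intros q. unfold atom_val. simpl. apply infmu_le; auto.
Qed.

Lemma Minf_minimal : minimal_model P Minf.
Proof.
  split; [apply Minf_model|]. intros B HB a alpha. unfold atom_val; simpl.
  apply infmu_le; auto.
Qed.
End Inf.

Theorem proposition1 (L : ConstraintLanguage) (Rel : Type) (arity : Rel -> nat)
  (P : Spec L arity) (phi : Constr L) (G : Goal L arity) (v : R) :
  logical_consequence P phi v G <->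
  (forall (I : Interp L) (A : RInterp L Rel arity I),
      minimal_model P A -> is_model_goal A phi v G).
Proof.
  split.
  - intros H I A [HA _]. apply H; auto.
  - intros H I A HA.
    destruct (H I _ (Minf_minimal L Rel arity P I A HA)) as [H1 H2].
    split; auto.
    intros alpha Hs. specialize (H2 alpha Hs).
    pose proof (proj2 (Minf_minimal L Rel arity P I A HA) A HA (g_atom G) alpha). lra.
Qed.
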